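(* Let $A,B$ be non-empty sets, $I$ a non-empty index set, $\{V_i\}_{i\in I}\subseteq\mathcal R(A)$, $\{W_i\}_{i\in I}\subseteq\mathcal R(B)$, ${\cal A}=(A,I,V_i)$, ${\cal B}=(B,I,W_i)$, let $R\in\mathcal R(A,B)$ be a uniform fuzzy relation and $Z\in\mathcal R(A,B)$ with $R\le Z$. Then $R$ is a solution to $WL^{2\text{-}3}(A,B,I,V_i,W_i,Z)$ if and only if all of the following hold: (i) $E_A^R$ is a solution to $WL^{1\text{-}4}(A,I,V_i,Z\circ Z^{-1})$; (ii) $E_B^R$ is a solution to $WL^{1\text{-}4}(B,I,W_i,Z^{-1}\circ Z)$; (iii) $\widetilde R$ is an isomorphism of the quotient fuzzy relational systems ${\cal A}/E_A^R$ and ${\cal B}/E_B^R$.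
   Context: $\mathcal L=(L,\wedge,\vee,\otimes,\to,0,1)$ is a complete residuated lattice; $x\leftrightarrow y=(x\to y)\wedge(y\to x)$. For non-empty sets $X,Y$, $\mathcal R(X,Y)$ is the set of fuzzy relations $X\times Y\to L$, $\mathcal R(X)=\mathcal R(X,X)$, ordered pointwise; $R^{-1}(y,x)=R(x,y)$; $(R\circ S)(x,t)=\bigvee_{y}R(x,y)\otimes S(y,t)$. For $R\in\mathcal R(A,B)$: kernel $E_A^R(a_1,a_2)=\bigwedge_{b\in B}R(a_1,b)\leftrightarrow R(a_2,b)$; co-kernel $E_B^R(b_1,b_2)=\bigwedge_{a\in A}R(a,b_1)\leftrightarrow R(a,b_2)$ (both fuzzy equivalences). $R$ is uniform if every $a$ has some $b$ with $R(a,b)=1$, every $b$ has some $a$ with $R(a,b)=1$, and $R(a,b_1)\otimes R(a,b_2)\le E_B^R(b_1,b_2)$ for all $a,b_1,b_2$. For uniform $R$, with $E=E_A^R$, $F=E_B^R$, the map $\widetilde R:A/E\to B/F$, $\widetilde R(E_a)=F_{\psi(a)}$, where $\psi:A\to B$ is any function with $R(a,\psi(a))=1$ for all $a$, is well defined (independent of choices) and bijective. For a fuzzy equivalence $E$ on $X$ (reflexive, symmetric, $E(x,y)\otimes E(y,z)\le E(x,z)$): $E_x(y)=E(x,y)$, $X/E=\{E_x\}$; the quotient of ${\cal X}=(X,I,V_i)$ is ${\cal X}/E=(X/E,I,V_i^{X/E})$ with $V_i^{X/E}(E_{x_1},E_{x_2})=(E\circ V_i\circ E)(x_1,x_2)$.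 An isomorphism of $(X,I,V_i)$ and $(Y,I,W_i)$ is a bijection $\varphi$ with $V_i(x_1,x_2)=W_i(\varphi(x_1),\varphi(x_2))$ for all $x_1,x_2$, $i$. $WL^{2\text{-}3}(A,B,I,V_i,W_i,Z)$ (unknown $U\in\mathcal R(A,B)$): $U^{-1}\circ V_i\le W_i\circ U^{-1}$ and $U\circ W_i\le V_i\circ U$ for all $i$, and $U\le Z$. $WL^{1\text{-}4}(X,I,V_i,W)$ (unknown $U\in\mathcal R(X)$): $U\circ V_i\le V_i\circ U$ and $U^{-1}\circ V_i\le V_i\circ U^{-1}$ for all $i$, and $U\le W$, $U^{-1}\le W$. *)

(* Defs.v *)
From Stdlib Require Import ClassicalEpsilon.

Record CRL := {
  car :> Type;
  le : car -> car -> Prop;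
  le_refl : forall x, le x x;
  le_trans : forall x y z, le x y -> le y z -> le x z;
  le_antisym : forall x y, le x y -> le y x -> x = y;
  sup : (car -> Prop) -> car;
  sup_ub : forall (P : car -> Prop) x, P x -> le x (sup P);
  sup_least : forall (P : car -> Prop) y, (forall x, P x -> le x y) -> le (sup P) y;
  inf : (car -> Prop) -> car;
  inf_lb : forall (P : car -> Prop) x, P x -> le (inf P) x;
  inf_greatest : forall (P : car -> Prop) y, (forall x, P x -> le y x) -> le y (inf P);
  zero : car;
  one : car;
  zero_least : forall x, le zero x;
  one_greatest : forall x, le x one;
  tens : car -> car -> car;
  tens_assoc : forall x y z, tens x (tens y z) = tens (tens x y) z;
  tens_comm : forall x y, tens x y = tens y x;
  tens_one : forall x, tens x one = x;
  impl : car -> car -> car;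
  adjoint : forall x y z, le (tens x y) z <-> le x (impl y z)
}.

Arguments le {_}. Arguments sup {_}. Arguments inf {_}. Arguments zero {_}.
Arguments one {_}. Arguments tens {_}. Arguments impl {_}.

Section FuzzyRel.
Variable L : CRL.

Definition meet (x y : L) : L := inf (fun z => z = x \/ z = y).
Definition join (x y : L) : L := sup (fun z => z = x \/ z = y).
Definition biimp (x y : L) : L := meet (impl x y) (impl y x).

Definition frel (X Y : Type) := X -> Y -> L.

Definition rle {X Y : Type} (R S : frel X Y) : Prop :=
  forall x y, le (R x y) (S x y).

Definition rinv {X Y : Type} (R : frel X Y) : frel Y X := fun y x => R x y.

Definition rcomp {X Y Z : Type} (R : frel X Y) (S : frel Y Z) : frel X Z :=
  fun x t => sup (fun v => exists y, v = tens (R x y) (S y t)).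

Definition kernel {A B : Type} (R : frel A B) : frel A A :=
  fun a1 a2 => inf (fun v => exists b, v = biimp (R a1 b) (R a2 b)).

Definition cokernel {A B : Type} (R : frel A B) : frel B B :=
  fun b1 b2 => inf (fun v => exists a, v = biimp (R a b1) (R a b2)).

Definition uniform {A B : Type} (R : frel A B) : Prop :=
  (forall a, exists b, R a b = one) /\
  (forall b, exists a, R a b = one) /\
  (forall a b1 b2, le (tens (R a b1) (R a b2)) (cokernel R b1 b2)).

Definition fequiv {X : Type} (E : frel X X) : Prop :=
  (forall x, E x x = one) /\ (forall x y, E x y = E y x) /\
  (forall x y z, le (tens (E x y) (E y z)) (E x z)).

Definition qset {X : Type} (E : frel X X) : Type :=
  { f : X -> L | exists x, f = E x }.

Definition qclass {X : Type} (E : frel X X) (x : X) : qset E :=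
  exist _ (E x) (ex_intro _ x eq_refl).

(** a chosen representative of a class (the quotient relations do not depend
    on this choice when E is a fuzzy equivalence) *)
Definition qrepr {X : Type} {E : frel X X} (c : qset E) : X :=
  proj1_sig (constructive_indefinite_description _ (proj2_sig c)).

Definition qrel {X : Type} (E : frel X X) (V : frel X X) : frel (qset E) (qset E) :=
  fun c1 c2 => rcomp (rcomp E V) E (qrepr c1) (qrepr c2).

Definition fiso {X Y I : Type} (V : I -> frel X X) (W : I -> frel Y Y) (phi : X -> Y) : Prop :=
  (forall x1 x2, phi x1 = phi x2 -> x1 = x2) /\
  (forall y, exists x, phi x = y) /\
  (forall i x1 x2, V i x1 x2 = W i (phi x1) (phi x2)).

(** the map R~ : A/E_A^R -> B/E_B^R, E_a |-> F_{psi a} for psi with R(a, psi a) = 1 *)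
Definition Rtilde {A B : Type} (R : frel A B) (psi : A -> B)
  (c : qset (kernel R)) : qset (cokernel R) :=
  qclass (cokernel R) (psi (qrepr c)).

Definition WL23_sol {A B I : Type} (V : I -> frel A A) (W : I -> frel B B)
  (Z : frel A B) (U : frel A B) : Prop :=
  (forall i, rle (rcomp (rinv U) (V i)) (rcomp (W i) (rinv U))) /\
  (forall i, rle (rcomp U (W i)) (rcomp (V i) U)) /\
  rle U Z.

Definition WL14_sol {X I : Type} (V : I -> frel X X) (W : frel X X) (U : frel X X) : Prop :=
  (forall i, rle (rcomp U (V i)) (rcomp (V i) U)) /\
  (forall i, rle (rcomp (rinv U) (V i)) (rcomp (V i) (rinv U))) /\
  rle U W /\ rle (rinv U) W.

End FuzzyRel.

(* Main.v *)
Require Import Defs.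
From Stdlib Require Import ClassicalEpsilon FunctionalExtensionality ProofIrrelevance.

Section S.
Variable L : CRL.
Section Basic.
Implicit Types x y z c : car L.

Lemma lrefl x : le x x. Proof. exact (le_refl L x). Qed.
Lemma ltr x y z : le x y -> le y z -> le x z. Proof. exact (le_trans L x y z). Qed.
Lemma lanti x y : le x y -> le y x -> x = y. Proof. exact (le_antisym L x y). Qed.
Lemma tA x y z : tens x (tens y z) = tens (tens x y) z. Proof. exact (tens_assoc L x y z). Qed.
Lemma tC x y : tens x y = tens y x. Proof. exact (tens_comm L x y). Qed.
Lemma t1 x : tens x one = x. Proof. exact (tens_one L x). Qed.
Lemma t1l x : tens one x = x. Proof. rewrite tC; apply t1. Qed.
Lemma adj1 x y z : le (tens x y) z -> le x (impl y z). Proof. apply (adjoint L). Qed.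
Lemma adj2 x y z : le x (impl y z) -> le (tens x y) z. Proof. apply (adjoint L). Qed.

Lemma tens_mono_l x y z : le x y -> le (tens x z) (tens y z).
Proof. intro H. apply adj2. apply ltr with y; auto. apply adj1, lrefl. Qed.
Lemma tens_mono_r x y z : le x y -> le (tens z x) (tens z y).
Proof. intro H. rewrite (tC z x), (tC z y). now apply tens_mono_l. Qed.
Lemma tens_mono x x' y y' : le x x' -> le y y' -> le (tens x y) (tens x' y').
Proof. intros; apply ltr with (tens x' y); [apply tens_mono_l|apply tens_mono_r]; auto. Qed.
Lemma mp x y : le (tens (impl x y) x) y. Proof. apply adj2, lrefl. Qed.

Lemma sup_ext (P Q : car L -> Prop) : (forall v, P v <-> Q v) -> sup P = sup Q.
Proof.
  intro H; apply lanti; apply sup_least; intros v Hv; apply sup_ub; apply H; auto.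
Qed.
Lemma inf_ext (P Q : car L -> Prop) : (forall v, P v <-> Q v) -> inf P = inf Q.
Proof.
  intro H; apply lanti; apply inf_greatest; intros v Hv; apply inf_lb; apply H; auto.
Qed.

Lemma meet_l x y : le (meet L x y) x. Proof. apply inf_lb; auto. Qed.
Lemma meet_r x y : le (meet L x y) y. Proof. apply inf_lb; auto. Qed.
Lemma meet_glb x y z : le z x -> le z y -> le z (meet L x y).
Proof. intros; apply inf_greatest; intros w [-> | ->]; auto. Qed.
Lemma biimp_l x y : le (tens (biimp L x y) x) y.
Proof. apply ltr with (tens (impl x y) x); [apply tens_mono_l, meet_l | apply mp]. Qed.
Lemma biimp_r x y : le (tens (biimp L x y) y) x.
Proof. apply ltr with (tens (impl y x) y); [apply tens_mono_l, meet_r | apply mp]. Qed.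
Lemma biimp_sym x y : biimp L x y = biimp L y x.
Proof. apply lanti; apply meet_glb; first [apply meet_r | apply meet_l]. Qed.
Lemma biimp_intro c x y : le (tens c x) y -> le (tens c y) x -> le c (biimp L x y).
Proof. intros; apply meet_glb; apply adj1; auto. Qed.
Lemma biimp_refl x : biimp L x x = one.
Proof. apply lanti; [apply one_greatest|]. apply biimp_intro; rewrite t1l; apply lrefl. Qed.

End Basic.
Lemma rcomp_ge {X Y Z} (R : frel L X Y) (S : frel L Y Z) x y z :
  le (tens (R x y) (S y z)) (rcomp L R S x z).
Proof. apply sup_ub; eauto. Qed.
Lemma rcomp_le {X Y Z} (R : frel L X Y) (S : frel L Y Z) x z c :
  (forall y, le (tens (R x y) (S y z)) c) -> le (rcomp L R S x z) c.
Proof. intro H; apply sup_least; intros v [y ->]; auto. Qed.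
Lemma rcomp_le_l {X Y Z} (R : frel L X Y) (S : frel L Y Z) x y t c :
  (forall y', le (tens (tens (R x y') (S y' y)) t) c) -> le (tens (rcomp L R S x y) t) c.
Proof. intro H; apply adj2, rcomp_le; intro; apply adj1, H. Qed.
Lemma rcomp_le_r {X Y Z} (S : frel L Y Z) (T : frel L Z X) r y w c :
  (forall y', le (tens r (tens (S y y') (T y' w))) c) -> le (tens r (rcomp L S T y w)) c.
Proof. intro H; rewrite tC; apply rcomp_le_l; intro; rewrite tC; apply H. Qed.

Lemma rcomp_assoc {X Y Z U} (R : frel L X Y) (S : frel L Y Z) (T : frel L Z U) :
  rcomp L (rcomp L R S) T = rcomp L R (rcomp L S T).
Proof.
  apply functional_extensionality; intro x; apply functional_extensionality; intro w.
  apply lanti.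
  - apply rcomp_le; intro y; apply rcomp_le_l; intro y'. rewrite <- tA.
    apply ltr with (tens (R x y') (rcomp L S T y' w)); [apply tens_mono_r, rcomp_ge | apply rcomp_ge].
  - apply rcomp_le; intro y'; apply rcomp_le_r; intro y. rewrite tA.
    apply ltr with (tens (rcomp L R S x y) (T y w)); [apply tens_mono_l, rcomp_ge | apply rcomp_ge].
Qed.

Lemma rle_refl {X Y} (R : frel L X Y) : rle L R R. Proof. intros x y; apply lrefl. Qed.
Lemma rle_trans {X Y} (R S T : frel L X Y) : rle L R S -> rle L S T -> rle L R T.
Proof. intros H1 H2 x y; eapply ltr; eauto. Qed.
Lemma rle_anti {X Y} (R S : frel L X Y) : rle L R S -> rle L S R -> R = S.
Proof.
  intros; apply functional_extensionality; intro x; apply functional_extensionality; intro y;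
  apply lanti; auto.
Qed.
Lemma rcomp_mono {X Y Z} (R R' : frel L X Y) (S S' : frel L Y Z) :
  rle L R R' -> rle L S S' -> rle L (rcomp L R S) (rcomp L R' S').
Proof.
  intros H1 H2 x z; apply rcomp_le; intro y.
  eapply ltr; [apply tens_mono; [apply H1 | apply H2] | apply rcomp_ge].
Qed.
Lemma rinv_mono {X Y} (R R' : frel L X Y) : rle L R R' -> rle L (rinv L R) (rinv L R').
Proof. intros H y x; apply H. Qed.
Lemma unit_l {X Y} (E : frel L X X) (S : frel L X Y) :
  (forall x, E x x = one) -> rle L S (rcomp L E S).
Proof.
  intros HE x z; apply ltr with (tens (E x x) (S x z)); [rewrite HE, t1l; apply lrefl | apply rcomp_ge].
Qed.
Lemma unit_r {X Y} (E : frel L Y Y) (S : frel L X Y) :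
  (forall x, E x x = one) -> rle L S (rcomp L S E).
Proof.
  intros HE x z; apply ltr with (tens (S x z) (E z z)); [rewrite HE, t1; apply lrefl | apply rcomp_ge].
Qed.
Lemma rinv_comp {X Y Z} (R : frel L X Y) (S : frel L Y Z) :
  rinv L (rcomp L R S) = rcomp L (rinv L S) (rinv L R).
Proof.
  apply functional_extensionality; intro z; apply functional_extensionality; intro x.
  unfold rinv, rcomp; apply sup_ext; intro v; split; intros [y ->]; exists y; apply tC.
Qed.
Lemma rcomp_ext {X X' Y Z Z'} (R1 : frel L X Y) (R2 : frel L X' Y) (S1 : frel L Y Z) (S2 : frel L Y Z') x x' z z' :
  (forall y, R1 x y = R2 x' y) -> (forall y, S1 y z = S2 y z') ->
  rcomp L R1 S1 x z = rcomp L R2 S2 x' z'.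
Proof.
  intros H1 H2; unfold rcomp; apply sup_ext; intro v; split; intros [y ->]; exists y;
  rewrite H1, H2; reflexivity.
Qed.

Lemma qrel_inv {X} (E V : frel L X X) x1 x1' x2 x2' :
  (forall x y, E x y = E y x) -> E x1 = E x1' -> E x2 = E x2' ->
  rcomp L (rcomp L E V) E x1 x2 = rcomp L (rcomp L E V) E x1' x2'.
Proof.
  intros Hs H1 H2. apply rcomp_ext.
  - intro y; apply rcomp_ext; [intro; rewrite H1; reflexivity | reflexivity].
  - intro y; rewrite (Hs y x2), (Hs y x2'), H2; reflexivity.
Qed.

Lemma qrepr_spec {X} (E : frel L X X) (c : qset L E) : proj1_sig c = E (qrepr L c).
Proof.
  unfold qrepr. destruct (constructive_indefinite_description _ _) as [x Hx]; simpl; exact Hx.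
Qed.
Lemma qset_eq {X} (E : frel L X X) (c1 c2 : qset L E) : proj1_sig c1 = proj1_sig c2 -> c1 = c2.
Proof.
  destruct c1 as [f1 p1], c2 as [f2 p2]; simpl; intro; subst; f_equal; apply proof_irrelevance.
Qed.

Section K.
Variables (A B : Type) (R : frel L A B).

Lemma ker_lb a1 a2 b : le (kernel L R a1 a2) (biimp L (R a1 b) (R a2 b)).
Proof. apply inf_lb; eauto. Qed.
Lemma ker_glb a1 a2 c : (forall b, le c (biimp L (R a1 b) (R a2 b))) -> le c (kernel L R a1 a2).
Proof. intro H; apply inf_greatest; intros v [b ->]; auto. Qed.
Lemma ker_sym a1 a2 : kernel L R a1 a2 = kernel L R a2 a1.
Proof. apply lanti; apply ker_glb; intro b; rewrite biimp_sym; apply ker_lb. Qed.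
Lemma ker_refl a : kernel L R a a = one.
Proof. apply lanti; [apply one_greatest|]; apply ker_glb; intro; rewrite biimp_refl; apply lrefl. Qed.
Lemma ker_R a a' b : le (tens (kernel L R a a') (R a' b)) (R a b).
Proof. eapply ltr; [apply tens_mono_l, (ker_lb a a' b) | apply biimp_r]. Qed.
Lemma cok_lb b1 b2 a : le (cokernel L R b1 b2) (biimp L (R a b1) (R a b2)).
Proof. apply inf_lb; eauto. Qed.
Lemma cok_glb b1 b2 c : (forall a, le c (biimp L (R a b1) (R a b2))) -> le c (cokernel L R b1 b2).
Proof. intro H; apply inf_greatest; intros v [a ->]; auto. Qed.
Lemma cok_sym b1 b2 : cokernel L R b1 b2 = cokernel L R b2 b1.
Proof. apply lanti; apply cok_glb; intro a; rewrite biimp_sym; apply cok_lb. Qed.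
Lemma cok_refl b : cokernel L R b b = one.
Proof. apply lanti; [apply one_greatest|]; apply cok_glb; intro; rewrite biimp_refl; apply lrefl. Qed.
Lemma cok_R a b b' : le (tens (R a b) (cokernel L R b b')) (R a b').
Proof. rewrite tC; eapply ltr; [apply tens_mono_l, (cok_lb b b' a) | apply biimp_l]. Qed.

Lemma ker_symf : rinv L (kernel L R) = kernel L R.
Proof. apply functional_extensionality; intro; apply functional_extensionality; intro; apply ker_sym. Qed.
Lemma cok_symf : rinv L (cokernel L R) = cokernel L R.
Proof. apply functional_extensionality; intro; apply functional_extensionality; intro; apply cok_sym. Qed.
Lemma ER : rcomp L (kernel L R) R = R.
Proof. apply rle_anti; [intros a b; apply rcomp_le; intro; apply ker_R | apply unit_l, ker_refl]. Qed.
Lemma RF : rcomp L R (cokernel L R) = R.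
Proof. apply rle_anti; [intros a b; apply rcomp_le; intro; apply cok_R | apply unit_r, cok_refl]. Qed.
Lemma F_Rinv : rcomp L (cokernel L R) (rinv L R) = rinv L R.
Proof. transitivity (rinv L (rcomp L R (cokernel L R))). rewrite rinv_comp, cok_symf; reflexivity. rewrite RF; reflexivity. Qed.

Lemma cok_one u v : cokernel L R u v = one -> forall a, R a u = R a v.
Proof.
  intros H a; apply lanti.
  - rewrite <- (t1 (R a u)), <- H; apply cok_R.
  - rewrite <- (t1 (R a v)), <- H, cok_sym; apply cok_R.
Qed.
Lemma cok_one_fun u v : cokernel L R u v = one -> cokernel L R u = cokernel L R v.
Proof.
  intro H; apply functional_extensionality; intro z; unfold cokernel; apply inf_ext;
  intro w; split; intros [a ->]; exists a; rewrite (cok_one _ _ H a); reflexivity.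
Qed.

Hypothesis hR : uniform L R.

Lemma cok_one_of a b1 b2 : R a b1 = one -> R a b2 = one -> cokernel L R b1 b2 = one.
Proof.
  intros H1 H2; apply lanti; [apply one_greatest|].
  apply ltr with (tens (R a b1) (R a b2)); [rewrite H1, H2, t1; apply lrefl | apply (proj2 (proj2 hR))].
Qed.

Lemma E_RRinv : kernel L R = rcomp L R (rinv L R).
Proof.
  apply functional_extensionality; intro a1; apply functional_extensionality; intro a2.
  apply lanti.
  - destruct (proj1 hR a1) as [b Hb].
    apply ltr with (tens (R a1 b) (R a2 b)); [| exact (rcomp_ge R (rinv L R) a1 b a2)].
    rewrite Hb, t1l, ker_sym.
    apply ltr with (tens (kernel L R a2 a1) (R a1 b)); [rewrite Hb, t1; apply lrefl | apply ker_R].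
  - apply rcomp_le; intro b; unfold rinv. apply ker_glb; intro b'. apply biimp_intro.
    + rewrite (tC (R a1 b) (R a2 b)), <- tA.
      eapply ltr; [apply tens_mono_r, (proj2 (proj2 hR) a1 b b') | apply cok_R].
    + rewrite <- tA.
      eapply ltr; [apply tens_mono_r, (proj2 (proj2 hR) a2 b b') | apply cok_R].
Qed.

Lemma F_RinvR : cokernel L R = rcomp L (rinv L R) R.
Proof.
  apply functional_extensionality; intro b1; apply functional_extensionality; intro b2.
  apply lanti.
  - destruct (proj1 (proj2 hR) b1) as [a Ha].
    apply ltr with (tens (R a b1) (R a b2)); [| exact (rcomp_ge (rinv L R) R b1 a b2)].
    rewrite Ha, t1l.
    apply ltr with (tens (R a b1) (cokernel L R b1 b2)); [rewrite Ha, t1l; apply lrefl | apply cok_R].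
  - apply rcomp_le; intro a; exact (proj2 (proj2 hR) a b1 b2).
Qed.

Lemma ker_psi (psi : A -> B) : (forall a, R a (psi a) = one) ->
  forall a1 a, kernel L R a1 a = R a (psi a1).
Proof.
  intros Hp a1 a; apply lanti.
  - rewrite ker_sym.
    apply ltr with (tens (kernel L R a a1) (R a1 (psi a1))); [rewrite Hp, t1; apply lrefl | apply ker_R].
  - rewrite E_RRinv.
    apply ltr with (tens (R a1 (psi a1)) (R a (psi a1))); [rewrite Hp, t1l; apply lrefl|].
    exact (rcomp_ge R (rinv L R) a1 (psi a1) a).
Qed.

Lemma key_EVE (psi : A -> B) (V : frel L A A) : (forall a, R a (psi a) = one) ->
  forall x1 x2, rcomp L (rcomp L (kernel L R) V) (kernel L R) x1 x2 =
                rcomp L (rcomp L (rinv L R) V) R (psi x1) (psi x2).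
Proof.
  intros Hp x1 x2. apply rcomp_ext.
  - intro y; apply rcomp_ext; [intro y'; unfold rinv; exact (ker_psi psi Hp x1 y') | reflexivity].
  - intro y; rewrite ker_sym; exact (ker_psi psi Hp x2 y).
Qed.

End K.
End S.

Theorem theorem7p2 (L : CRL) (A B I : Type)
  (hA : inhabited A) (hB : inhabited B) (hI : inhabited I)
  (V : I -> frel L A A) (W : I -> frel L B B) (R Z : frel L A B)
  (hR : uniform L R) (hRZ : rle L R Z) :
  WL23_sol L V W Z R <->
  (WL14_sol L V (rcomp L Z (rinv L Z)) (kernel L R) /\
   WL14_sol L W (rcomp L (rinv L Z) Z) (cokernel L R) /\
   (forall psi : A -> B, (forall a, R a (psi a) = one) ->
      fiso L (fun i => qrel L (kernel L R) (V i))
             (fun i => qrel L (cokernel L R) (W i))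
             (Rtilde L R psi))).
Proof.
  pose proof (E_RRinv _ _ _ R hR) as HE.
  pose proof (F_RinvR _ _ _ R hR) as HF.
  pose proof (ker_symf _ _ _ R) as HEs.
  pose proof (cok_symf _ _ _ R) as HFs.
  pose proof (ER _ _ _ R) as HER.
  pose proof (RF _ _ _ R) as HRF.
  pose proof (F_Rinv _ _ _ R) as HFR.
  split.
  - intros [H1 [H2 H3]].
    assert (Hi : forall i, rle L (rcomp L (kernel L R) (V i)) (rcomp L (V i) (kernel L R))).
    { intro i. rewrite HE, rcomp_assoc.
      eapply rle_trans. apply rcomp_mono. apply rle_refl. apply H1.
      rewrite <- rcomp_assoc.
      eapply rle_trans. apply rcomp_mono. apply H2. apply rle_refl.
      rewrite rcomp_assoc. apply rle_refl. }
    assert (HiZ : rle L (kernel L R) (rcomp L Z (rinv L Z))).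
    { rewrite HE. apply rcomp_mono; auto. apply rinv_mono; auto. }
    assert (Hii : forall i, rle L (rcomp L (cokernel L R) (W i)) (rcomp L (W i) (cokernel L R))).
    { intro i. rewrite HF, rcomp_assoc.
      eapply rle_trans. apply rcomp_mono. apply rle_refl. apply H2.
      rewrite <- rcomp_assoc.
      eapply rle_trans. apply rcomp_mono. apply H1. apply rle_refl.
      rewrite rcomp_assoc. apply rle_refl. }
    assert (HiiZ : rle L (cokernel L R) (rcomp L (rinv L Z) Z)).
    { rewrite HF. apply rcomp_mono; auto. apply rinv_mono; auto. }
    assert (Hkey : forall i, rcomp L (rcomp L (cokernel L R) (W i)) (cokernel L R)
                           = rcomp L (rcomp L (rinv L R) (V i)) R).
    { intro i. apply rle_anti.
      - assert (e1 : rcomp L (rcomp L (cokernel L R) (W i)) (cokernel L R)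
                   = rcomp L (rinv L R) (rcomp L (rcomp L R (W i)) (cokernel L R))).
        { rewrite <- !rcomp_assoc, <- HF. reflexivity. }
        rewrite e1.
        eapply rle_trans. apply rcomp_mono. apply rle_refl. apply rcomp_mono. apply H2. apply rle_refl.
        rewrite !rcomp_assoc, HRF. apply rle_refl.
      - eapply rle_trans. apply rcomp_mono. apply H1. apply rle_refl.
        rewrite (rcomp_assoc L (W i) (rinv L R) R), <- HF.
        apply rcomp_mono; [apply unit_l, cok_refl | apply rle_refl]. }
    split; [|split].
    + repeat split; try rewrite HEs; auto.
    + repeat split; try rewrite HFs; auto.
    + intros psi Hpsi. split; [|split].
      * intros c1 c2 Heq. apply qset_eq. rewrite !qrepr_spec.
        apply (f_equal (@proj1_sig _ _)) in Heq. unfold Rtilde, qclass in Heq; simpl in Heq.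
        assert (H0 : cokernel L R (psi (qrepr L c1)) (psi (qrepr L c2)) = one).
        { rewrite Heq. apply cok_refl. }
        apply functional_extensionality; intro a.
        rewrite !(ker_psi _ _ _ R hR psi Hpsi). apply (cok_one _ _ _ R _ _ H0).
      * intro d. destruct (proj1 (proj2 hR) (qrepr L d)) as [a Ha].
        exists (qclass L (kernel L R) a). apply qset_eq. unfold Rtilde; simpl.
        rewrite (qrepr_spec _ _ d). apply cok_one_fun.
        apply (cok_one_of _ _ _ R hR a); auto.
        rewrite <- (ker_psi _ _ _ R hR psi Hpsi).
        pose proof (qrepr_spec _ _ (qclass L (kernel L R) a)) as Hs. simpl in Hs.
        rewrite <- Hs. apply ker_refl.
      * intros i c1 c2. unfold qrel. rewrite (key_EVE _ _ _ R hR psi (V i) Hpsi).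
        rewrite <- Hkey. apply qrel_inv.
        -- intros; apply cok_sym.
        -- rewrite <- qrepr_spec. reflexivity.
        -- rewrite <- qrepr_spec. reflexivity.
  - intros [[HE1 [HE2 [HE3 HE4]]] [[HF1 [HF2 [HF3 HF4]]] Hiso]].
    set (psi := fun a => proj1_sig (constructive_indefinite_description _ (proj1 hR a))).
    assert (Hpsi : forall a, R a (psi a) = one).
    { intro a; exact (proj2_sig (constructive_indefinite_description _ (proj1 hR a))). }
    set (phi := fun b => proj1_sig (constructive_indefinite_description _ (proj1 (proj2 hR) b))).
    assert (Hphi : forall b, R (phi b) b = one).
    { intro b; exact (proj2_sig (constructive_indefinite_description _ (proj1 (proj2 hR) b))). }
    destruct (Hiso psi Hpsi) as [_ [_ Hq]].
    assert (Hpt : forall b, cokernel L R b (psi (qrepr L (qclass L (kernel L R) (phi b)))) = one).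
    { intro b. apply (cok_one_of _ _ _ R hR (phi b)); auto.
      rewrite <- (ker_psi _ _ _ R hR psi Hpsi).
      pose proof (qrepr_spec _ _ (qclass L (kernel L R) (phi b))) as Hs. simpl in Hs.
      rewrite <- Hs. apply ker_refl. }
    assert (Hkey : forall i, rcomp L (rcomp L (rinv L R) (V i)) R
                           = rcomp L (rcomp L (cokernel L R) (W i)) (cokernel L R)).
    { intro i. apply functional_extensionality; intro b1; apply functional_extensionality; intro b2.
      specialize (Hq i (qclass L (kernel L R) (phi b1)) (qclass L (kernel L R) (phi b2))).
      unfold qrel in Hq. rewrite (key_EVE _ _ _ R hR psi (V i) Hpsi) in Hq.
      pose proof (Hpt b1) as P1. pose proof (Hpt b2) as P2.
      transitivity (rcomp L (rcomp L (rinv L R) (V i)) R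
                      (psi (qrepr L (qclass L (kernel L R) (phi b1))))
                      (psi (qrepr L (qclass L (kernel L R) (phi b2))))).
      { apply rcomp_ext.
        - intro y; apply rcomp_ext; [intro y'; unfold rinv; apply (cok_one _ _ _ R _ _ P1) | reflexivity].
        - intro y; apply (cok_one _ _ _ R _ _ P2). }
      rewrite Hq. apply qrel_inv.
      - intros; apply cok_sym.
      - rewrite <- qrepr_spec. unfold Rtilde; simpl. symmetry; apply cok_one_fun; auto.
      - rewrite <- qrepr_spec. unfold Rtilde; simpl. symmetry; apply cok_one_fun; auto. }
    split; [|split]; auto.
    + intro i.
      eapply rle_trans. apply unit_r, ker_refl.
      assert (eq : rcomp L (rcomp L (rinv L R) (V i)) (kernel L R)
                 = rcomp L (rcomp L (cokernel L R) (W i)) (rinv L R)).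
      { rewrite HE, <- rcomp_assoc, Hkey.
        rewrite (rcomp_assoc L (rcomp L (cokernel L R) (W i)) (cokernel L R) (rinv L R)), HFR.
        reflexivity. }
      rewrite eq.
      eapply rle_trans. apply rcomp_mono. apply HF1. apply rle_refl.
      rewrite (rcomp_assoc L (W i) (cokernel L R) (rinv L R)), HFR. apply rle_refl.
    + intro i.
      eapply rle_trans. apply rcomp_mono. apply rle_refl.
      eapply rle_trans. apply unit_l, cok_refl. apply unit_r, cok_refl.
      rewrite <- Hkey.
      assert (eq : rcomp L R (rcomp L (rcomp L (rinv L R) (V i)) R)
                 = rcomp L (rcomp L (kernel L R) (V i)) R).
      { rewrite HE, !rcomp_assoc. reflexivity. }
      rewrite eq.
      eapply rle_trans. apply rcomp_mono. apply HE1. apply rle_refl.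
      rewrite rcomp_assoc, HER. apply rle_refl.
Qed.
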